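(* Let $n=5$, $x_i=i$ for $i=1,\dots,5$, and $Y_i=\beta_0+\beta_1x_i+\varepsilon_i$ with unknown $\beta_0,\beta_1\in\mathbb{R}$ and $\varepsilon_1,\dots,\varepsilon_5$ i.i.d. with a continuous distribution that is symmetric about $0$. Let $s_1<s_2<\cdots<s_{10}$ be the ten slopes $S_{ij}=(Y_i-Y_j)/(x_i-x_j)$, $i<j$, sorted increasingly. Define $p_2=P(\beta_1\in(s_2,s_{10})\wedge 2s_2\le s_1+s_9\wedge 2s_9<s_2+s_{10})$ and $p_3=P(\beta_1\in(s_1,s_9)\wedge s_1+s_9<2s_2\wedge s_2+s_{10}\le 2s_9)$. Then $p_2=p_3$.
   Context: Ties among the slopes occur with probability zero and are ignored. *)

(* Defs.v *)
From HB Require Import structures.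
From mathcomp Require Import all_boot all_order all_algebra.
From mathcomp Require Import all_classical all_reals all_analysis.
Set Implicit Arguments. Unset Strict Implicit. Unset Printing Implicit Defensive.
Import Order.TTheory GRing.Theory Num.Theory.
Local Open Scope classical_set_scope.
Local Open Scope ring_scope.

(* Design points x_i = i for i = 1..5; index i : 'I_5 stands for i+1. *)
Definition xs {R : realType} (i : 'I_5) : R := (i.+1)%:R.

Definition Ys {R : realType} (b0 b1 : R) (e : 'I_5 -> R) (i : 'I_5) : R :=
  b0 + b1 * xs i + e i.

Definition slopes {R : realType} (y : 'I_5 -> R) : seq R :=
  [seq (y ij.1 - y ij.2) / (xs ij.1 - xs ij.2)
  | ij <- [seq ij <- [seq (i, j) | i <- enum 'I_5, j <- enum 'I_5]
          | (val ij.1 < val ij.2)%N]].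

(* k-th smallest slope s_k (1-based), from the increasingly sorted list. *)
Definition sslope {R : realType} (y : 'I_5 -> R) (k : nat) : R :=
  nth 0 (sort <=%R (slopes y)) k.-1.

(* Mutual independence of a finite family of real random variables:
   the joint law factorizes on all measurable rectangles (taking B_i = setT
   covers every subfamily). *)
Definition mutually_independent {d : measure_display} {T : measurableType d}
  {R : realType} (P : probability T R) {n : nat} (X : 'I_n -> {RV P >-> R}) :=
  forall B : 'I_n -> set R, (forall i, measurable (B i)) ->
    P (\bigcap_(i in [set: 'I_n]) (X i @^-1` B i)) =
    (\prod_(i < n) P (X i @^-1` B i))%E.

Definition event_p2 {T : Type} {R : realType} (b0 b1 : R) (eps : 'I_5 -> T -> R)
  : set T :=
  [set w | let s := sslope (Ys b0 b1 (fun i => eps i w)) in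
     [/\ s 2 < b1 < s 10, 2 * s 2 <= s 1 + s 9 & 2 * s 9 < s 2 + s 10]].

Definition event_p3 {T : Type} {R : realType} (b0 b1 : R) (eps : 'I_5 -> T -> R)
  : set T :=
  [set w | let s := sslope (Ys b0 b1 (fun i => eps i w)) in
     [/\ s 1 < b1 < s 9, s 1 + s 9 < 2 * s 2 & s 2 + s 10 <= 2 * s 9]].

(* Main.v *)
Require Import Defs.
From HB Require Import structures.
From mathcomp Require Import all_boot all_order all_algebra.
From mathcomp Require Import all_classical all_reals all_analysis.
From mathcomp Require Import measurable_realfun.
From mathcomp Require Import ring lra zify.
Import Order.TTheory GRing.Theory Num.Theory.
Local Open Scope classical_set_scope.
Local Open Scope ring_scope.

Section Sorting.
Context {R : realType}.

Fixpoint ins (a : R) (s : seq R) : seq R :=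
  if s is x :: s' then (if a <= x then a :: x :: s' else x :: ins a s')
  else [:: a].

Definition isort (s : seq R) := foldr ins [::] s.

Lemma ins_path y a s : y <= a -> path <=%R y s -> path <=%R y (ins a s).
Proof.
elim: s y => [|x s IH] y ya /=; first by rewrite ya.
move=> /andP[yx px]; case: ifP => ax /=.
  by rewrite ya ax.
rewrite yx IH //; apply: ltW; by rewrite ltNge ax.
Qed.

Lemma ins_sorted a s : sorted <=%R s -> sorted <=%R (ins a s).
Proof.
case: s => [//|x s] /= px; case: ifP => ax /=; first by rewrite ax.
apply: ins_path => //; apply: ltW; by rewrite ltNge ax.
Qed.

Lemma ins_perm a s : perm_eq (ins a s) (a :: s).
Proof.
elim: s => [//|x s IH] /=; case: ifP => _ //.
apply: (@perm_trans _ (x :: a :: s)); first by rewrite perm_cons.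
by rewrite (perm_catCA [:: x] [:: a] s).
Qed.

Lemma isort_sorted s : sorted <=%R (isort s).
Proof. by elim: s => [//|x s IH] /=; apply: ins_sorted. Qed.

Lemma isort_perm s : perm_eq (isort s) s.
Proof.
elim: s => [//|x s IH] /=; apply: perm_trans (ins_perm _ _) _.
by rewrite perm_cons.
Qed.

Lemma size_isort s : size (isort s) = size s.
Proof. exact: perm_size (isort_perm s). Qed.

Lemma sort_isort s : sort <=%R s = isort s.
Proof.
apply: (sorted_eq le_trans le_anti); first by apply: sort_sorted => x y; have := le_total x y.
  exact: isort_sorted.
by rewrite perm_sort perm_sym isort_perm.
Qed.

Lemma sort_rev_map (c : R) s :
  sort <=%R [seq c - x | x <- s] = rev [seq c - x | x <- sort <=%R s].
Proof.
apply: (sorted_eq le_trans le_anti); first by apply: sort_sorted => x y; have := le_total x y.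
  rewrite rev_sorted; apply: (homo_sorted (e := <=%R)).
    by move=> x y xy /=; rewrite lerB.
  by apply: sort_sorted => x y; have := le_total x y.
by rewrite perm_sort perm_sym perm_rev; apply: perm_map; rewrite perm_sort.
Qed.
End Sorting.

Section Meas.
Context {d} {X : measurableType d} {R : realType}.

Lemma ins_meas n (s : X -> seq R) (a : X -> R) :
  (forall x, size (s x) = n) ->
  (forall k, measurable_fun setT (fun x => nth 0 (s x) k)) ->
  measurable_fun setT a ->
  forall k, measurable_fun setT (fun x => nth 0 (ins (a x) (s x)) k).
Proof.
elim: n s => [|n IH] s Hs Hm ma k.
  have s0 x : s x = [::] by apply/eqP; rewrite -size_eq0 Hs.
  under eq_fun do rewrite s0.
  by case: k => [|k] //=; apply: measurable_cst.
pose h x := nth 0 (s x) 0; pose t x := behead (s x).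
have st x : s x = h x :: t x.
  by rewrite /h /t; have := Hs x; case: (s x).
have mt k' : measurable_fun setT (fun x => nth 0 (t x) k').
  under eq_fun do rewrite /t nth_behead; exact: Hm.
have mh : measurable_fun setT h by exact: Hm.
rewrite (_ : (fun x => _) = (fun x => if a x <= h x then nth 0 [:: a x, h x & t x] k
   else nth 0 (h x :: ins (a x) (t x)) k)); last first.
  by apply/funext => x; rewrite st /=; case: ifP.
apply: measurable_fun_ifT.
- exact: measurable_fun_ler.
- by case: k => [|[|k]] //=.
- case: k => [|k] //=; apply: IH => // x.
  by rewrite /t size_behead Hs.
Qed.

Fixpoint allmeas (gs : seq (X -> R)) : Prop :=
  if gs is g :: gs' then measurable_fun setT g /\ allmeas gs' else True.

Lemma isort_meas gs : allmeas gs ->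
  forall k, measurable_fun setT (fun x => nth 0 (isort [seq g x | g <- gs]) k).
Proof.
elim: gs => [|g gs IH] /=.
  by move=> _ k; under eq_fun do rewrite nth_nil; exact: measurable_cst.
move=> [mg ma] k; apply: (@ins_meas (size gs)) => //.
by move=> x; rewrite size_isort size_map.
by apply: IH.
Qed.

Lemma sort_meas gs : allmeas gs ->
  forall k, measurable_fun setT (fun x => nth 0 (sort <=%R [seq g x | g <- gs]) k).
Proof.
move=> ma k; under eq_fun do rewrite sort_isort; exact: isort_meas.
Qed.

Lemma allmeas_map (I : Type) (h : I -> X -> R) (l : seq I) :
  (forall i, measurable_fun setT (h i)) -> allmeas [seq h i | i <- l].
Proof. by move=> mh; elim: l => //= i l ->; split. Qed.
End Meas.

Definition V (R : realType) := 'I_5 -> R.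
HB.instance Definition _ (R : realType) := gen_eqMixin (V R).
HB.instance Definition _ (R : realType) := gen_choiceMixin (V R).
HB.instance Definition _ (R : realType) := isPointed.Build (V R) (fun _ => 0).

Section Main.
Context (R : realType).

Definition rects : set (set (V R)) :=
  [set A | exists B : 'I_5 -> set R, (forall i, measurable (B i)) /\
     A = [set e | forall i, B i (e i)]].

Local Notation E := (g_sigma_algebraType rects).

Lemma rects_setI : setI_closed rects.
Proof.
move=> _ _ [B [mB ->]] [C [mC ->]]; exists (fun i => B i `&` C i); split.
  by move=> i; apply: measurableI.
by apply/seteqP; split => e /=; [move=> [h1 h2] i; split|move=> h; split => i; case: (h i)].
Qed.

Lemma proj_meas (i : 'I_5) : measurable_fun setT (fun e : E => e i).
Proof.
move=> _ B mB; apply: sub_sigma_algebra.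
exists (fun j => if j == i then B else setT); split.
  by move=> j; case: eqP.
apply/seteqP; split => e /=.
  by move=> [_ h] j; case: eqP => // ->.
by move=> h; split => //; have := h i; rewrite eqxx.
Qed.

Lemma vec_meas d (T : measurableType d) (f : 'I_5 -> T -> R) :
  (forall i, measurable_fun setT (f i)) ->
  measurable_fun setT (fun w => (fun i => f i w) : E).
Proof.
move=> mf; apply: (@measurability _ _ _ E _ _ rects) => //.
move=> _ [_ [B [mB ->]] <-].
rewrite setTI.
have -> : (fun w => (fun i => f i w) : E) @^-1` [set e | forall i, B i (e i)]
   = \bigcap_(i in [set: 'I_5]) (f i @^-1` B i).
  by apply/seteqP; split => w /=; [move=> h i _; exact: h|move=> h i; exact: h].
apply: fin_bigcap_measurable; first exact: finite_finset.
by move=> i _; rewrite -[X in measurable X]setTI; apply: mf.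
Qed.


Lemma sslope_meas b0 b1 k : measurable_fun setT (fun e : E => sslope (Ys b0 b1 e) k).
Proof.
pose h (ij : 'I_5 * 'I_5) (e : E) :=
  (Ys b0 b1 e ij.1 - Ys b0 b1 e ij.2) / (xs ij.1 - xs ij.2).
have -> : (fun e : E => sslope (Ys b0 b1 e) k) = (fun e => nth 0 (sort <=%R
   [seq g e | g <- [seq h ij | ij <- [seq ij <- [seq (i, j) | i <- enum 'I_5, j <- enum 'I_5]
          | (val ij.1 < val ij.2)%N]]]) k.-1).
  by apply/funext => e; rewrite -map_comp.
apply: sort_meas; apply: allmeas_map => ij.
rewrite /h /Ys; apply: measurable_funM; last exact: measurable_cst.
apply: measurable_funB; apply: measurable_funD; (exact: measurable_cst || exact: proj_meas).
Qed.

Definition A2 b0 b1 : set E := [set e | let s := sslope (Ys b0 b1 e) in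
  [/\ s 2 < b1 < s 10, 2 * s 2 <= s 1 + s 9 & 2 * s 9 < s 2 + s 10]].

Lemma A2_meas b0 b1 : measurable (A2 b0 b1).
Proof.
have ms := sslope_meas b0 b1.
have m2 k : measurable_fun setT (fun e : E => 2 * sslope (Ys b0 b1 e) k).
  by apply: measurable_funM => //; exact: measurable_cst.
have mp k l : measurable_fun setT (fun e : E => sslope (Ys b0 b1 e) k + sslope (Ys b0 b1 e) l).
  exact: measurable_funD.
have mb : measurable_fun setT (fun e : E => let s := sslope (Ys b0 b1 e) in
   [&& s 2 < b1, b1 < s 10, 2 * s 2 <= s 1 + s 9 & 2 * s 9 < s 2 + s 10]).
  repeat apply: measurable_and.
  - by apply: measurable_fun_ltr => //; exact: measurable_cst.
  - by apply: measurable_fun_ltr => //; exact: measurable_cst.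
  - exact: measurable_fun_ler.
  - exact: measurable_fun_ltr.
have -> : A2 b0 b1 = setT `&` (fun e : E => let s := sslope (Ys b0 b1 e) in
   [&& s 2 < b1, b1 < s 10, 2 * s 2 <= s 1 + s 9 & 2 * s 9 < s 2 + s 10]) @^-1` [set true].
  apply/seteqP; split => e /=.
    by move=> [/andP[h1 h2] h3 h4]; split => //; rewrite h1 h2 h3 h4.
  by move=> [_ /and4P[h1 h2 h3 h4]]; split => //; rewrite h1 h2.
exact: mb.
Qed.

Lemma slopes_neg b0 b1 (e : 'I_5 -> R) :
  slopes (Ys b0 b1 (fun i => - e i)) = [seq 2 * b1 - x | x <- slopes (Ys b0 b1 e)].
Proof.
rewrite /slopes; set L := [seq ij <- _ | _]; rewrite -map_comp; apply/eq_in_map => -[i j].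
rewrite mem_filter /= => /andP[ij _].
have hx : xs i - xs j != 0 :> R.
  by rewrite /xs subr_eq0 eqr_nat eqSS neq_ltn ij.
rewrite /Ys; field; by rewrite !nat1r subr_eq0 eqr_nat eqSS neq_ltn ij.
Qed.

Lemma size_slopes (y : 'I_5 -> R) : size (slopes y) = 10%N.
Proof.
rewrite /slopes size_map size_filter.
pose F := fun ij : 'I_5 * 'I_5 => (val ij.1, val ij.2).
rewrite (_ : count _ _ = count (fun ab : nat * nat => (ab.1 < ab.2)%N)
   (map F [seq (i, j) | i <- enum 'I_5, j <- enum 'I_5])); last first.
  by rewrite count_map; apply: eq_count.
have -> : map F [seq (i, j) | i <- enum 'I_5, j <- enum 'I_5] =
    [seq (a, b) | a <- iota 0 5, b <- iota 0 5].
  by rewrite map_allpairs -val_enum_ord allpairs_mapl allpairs_mapr.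
by [].
Qed.

Lemma sslope_neg b0 b1 (e : 'I_5 -> R) k : (0 < k <= 10)%N ->
  sslope (Ys b0 b1 (fun i => - e i)) k = 2 * b1 - sslope (Ys b0 b1 e) (11 - k)%N.
Proof.
move=> /andP[k0 k10].
rewrite /sslope slopes_neg sort_rev_map nth_rev; last first.
  by rewrite size_map size_sort size_slopes; lia.
rewrite size_map size_sort size_slopes (nth_map 0); last first.
  by rewrite size_sort size_slopes; lia.
by congr (_ - nth _ _ _); lia.
Qed.

Lemma cond_equiv (b1 : R) (s s' : nat -> R) :
  (forall k, (0 < k <= 10)%N -> s' k = 2 * b1 - s (11 - k)%N) ->
  ([/\ s' 2 < b1 < s' 10, 2 * s' 2 <= s' 1 + s' 9 & 2 * s' 9 < s' 2 + s' 10] <->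
   [/\ s 1 < b1 < s 9, s 1 + s 9 < 2 * s 2 & s 2 + s 10 <= 2 * s 9]).
Proof.
move=> H.
have h1 : s' 1 = 2 * b1 - s 10 by rewrite H.
have h2 : s' 2 = 2 * b1 - s 9 by rewrite H.
have h9 : s' 9 = 2 * b1 - s 2 by rewrite H.
have h10 : s' 10 = 2 * b1 - s 1 by rewrite H.
rewrite h1 h2 h9 h10.
by split => -[/andP[a b] c e]; split; first (apply/andP; split); lra.
Qed.

End Main.

Theorem theorem7 (d : measure_display) (T : measurableType d) (R : realType)
  (P : probability T R) (eps : 'I_5 -> {RV P >-> R}) (b0 b1 : R) :
  mutually_independent eps ->
  (forall (i : 'I_5) (B : set R), measurable B ->
     P (eps i @^-1` B) = P (eps ord0 @^-1` B)) ->
  (forall a : R, P (eps ord0 @^-1` [set a]) = 0%E) ->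
  (forall B : set R, measurable B ->
     P (eps ord0 @^-1` ((fun x => - x) @^-1` B)) = P (eps ord0 @^-1` B)) ->
  P (event_p2 b0 b1 (fun i => eps i)) = P (event_p3 b0 b1 (fun i => eps i)).
Proof.
move=> ind ident _ symm.
pose X := fun w => (fun i => eps i w) : g_sigma_algebraType (@rects R).
pose Xn := fun w => (fun i => - eps i w) : g_sigma_algebraType (@rects R).
have mX : measurable_fun setT X.
  by apply: vec_meas => i; exact: measurable_funP.
have mXn : measurable_fun setT Xn.
  by apply: vec_meas => i; apply: measurable_funN; exact: measurable_funP.
have mo : forall B : set R, measurable B -> measurable ((fun x : R => - x) @^-1` B).
  move=> B mB; rewrite -[X in measurable X]setTI.
  by apply: (measurable_funN (@measurable_id _ R setT)).
have key : forall A, measurable A -> P (X @^-1` A) = P (Xn @^-1` A).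
  move=> A mA.
  apply: (@measure_unique _ R (g_sigma_algebraType (@rects R)) (@rects R) (fun=> setT) erefl (@rects_setI R)
     _ _ (pushforward P X) (pushforward P Xn) _ _ A mA).
  - move=> _; exists (fun _ => setT); split => //.
    by apply/seteqP; split.
  - by apply/seteqP; split => // x _; exists 0%N.
  - move=> _ [B [mB ->]]; change (P (X @^-1` [set e | forall i, B i (e i)]) = P (Xn @^-1` [set e | forall i, B i (e i)])).
    have -> : X @^-1` [set e | forall i, B i (e i)] =
        \bigcap_(i in [set: 'I_5]) (eps i @^-1` B i).
      by apply/seteqP; split => w /=; [move=> h i _; exact: h|move=> h i; exact: h].
    have -> : Xn @^-1` [set e | forall i, B i (e i)] =
        \bigcap_(i in [set: 'I_5]) (eps i @^-1` ((fun x => - x) @^-1` B i)).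
      by apply/seteqP; split => w /=; [move=> h i _; exact: h|move=> h i; exact: h].
    rewrite ind // ind; last by move=> i; exact: mo.
    apply: eq_bigr => i _.
    by rewrite (ident i (B i)) // (ident i _ (mo _ (mB i))) symm.
  - by move=> _; change (P (X @^-1` setT) < +oo)%E; rewrite preimage_setT probability_setT ltry.
have -> : event_p2 b0 b1 (fun i => eps i) = X @^-1` A2 R b0 b1 by [].
have -> : event_p3 b0 b1 (fun i => eps i) = Xn @^-1` A2 R b0 b1.
  apply/seteqP; split => w;
  have ce := cond_equiv R b1 (sslope (Ys b0 b1 (fun i => eps i w)))
    (sslope (Ys b0 b1 (fun i => - eps i w))) (sslope_neg R b0 b1 (fun i => eps i w)).
    by move=> h; exact: ce.2 h.
  by move=> h; exact: ce.1 h.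
exact: key (A2_meas R b0 b1).
Qed.
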